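(* Let $q_1,q_2,q_3,q_4$ be indeterminates of weights $1,2,3,4$ and $S(y)=y^4+q_1y^3+q_2y^2+q_3y+q_4$. Then the differential equation $(h'(x))^2=S(h(x))$ has a unique solution of the form $h=f'/f$ with $f(x)=x+O(x^2)$, i.e. $h(x)=\frac1x+c_1+c_2x+\dots\in\mathbb{Q}[q_1,q_2,q_3,q_4][[x]][x^{-1}]$. This $h$ determines uniquely the power series $Q(x)=x/f(x)=1+a_1x+a_2x^2+\dots\in\mathbb{Q}[q_1,\dots,q_4][[x]]$, and each $a_n$ is a weighted homogeneous polynomial of weight $n$ in $q_1,\dots,q_4$. *)

(* Defs.v *)
From HB Require Import structures.
From mathcomp Require Import all_boot all_order all_algebra.
From mathcomp Require Export mpoly.
Set Implicit Arguments. Unset Strict Implicit. Unset Printing Implicit Defensive.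
Import Order.TTheory GRing.Theory Num.Theory.
Local Open Scope ring_scope.

(* Coefficient ring Q[q1,q2,q3,q4]; q_k is 'X_(k-1), i.e. variable i : 'I_4
   stands for q_(i+1) and has weight i+1. *)
Definition Rq := {mpoly rat[4]}.
Definition q (i : 'I_4) : Rq := 'X_i.
Definition q1 : Rq := q (@Ordinal 4 0 isT).
Definition q2 : Rq := q (@Ordinal 4 1 isT).
Definition q3 : Rq := q (@Ordinal 4 2 isT).
Definition q4 : Rq := q (@Ordinal 4 3 isT).

(* Formal power series over a ring R, as coefficient sequences:
   s n is the coefficient of x^n. *)
Definition fps (R : Type) := nat -> R.

Definition fps_mul (R : nzRingType) (f g : fps R) : fps R :=
  fun n => \sum_(i < n.+1) f i * g (n - i)%N.
Definition fps_add (R : nzRingType) (f g : fps R) : fps R := fun n => f n + g n.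
Definition fps_scale (R : nzRingType) (c : R) (f : fps R) : fps R := fun n => c * f n.
Definition fps_deriv (R : nzRingType) (f : fps R) : fps R :=
  fun n => f n.+1 *+ n.+1.
Definition fps_X (R : nzRingType) : fps R := fun n => if n == 1%N then 1 else 0.
Definition fps_pow (R : nzRingType) (f : fps R) (k : nat) : fps R :=
  iter k (fps_mul f) (fun n => if n == 0%N then 1 else 0).

(* The ODE (h')^2 = S(h), S(y) = y^4 + q1 y^3 + q2 y^2 + q3 y + q4, for
   h = f'/f, with denominators cleared: multiplying by f^4 (f is a nonzero
   element of the integral domain Q[q][[x]][x^-1]) it is equivalent to
   (f'' f - f'^2)^2 = f'^4 + q1 f'^3 f + q2 f'^2 f^2 + q3 f' f^3 + q4 f^4. *)
Definition ode_for_logderiv (f : fps Rq) : Prop :=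
  let f1 := fps_deriv f in
  let f2 := fps_deriv f1 in
  let W := fps_add (fps_mul f2 f) (fps_scale (-1) (fps_mul f1 f1)) in
  let P a b := fps_mul (fps_pow f1 a) (fps_pow f b) in
  forall n,
    fps_pow W 2%N n =
    P 4%N 0%N n + q1 * P 3%N 1%N n + q2 * P 2%N 2%N n
    + q3 * P 1%N 3%N n + q4 * P 0%N 4%N n.

Definition normalized (f : fps Rq) : Prop := f 0%N = 0 /\ f 1%N = 1.

Definition wt_homog (d : nat) (p : Rq) : Prop :=
  forall m : 'X_{1..4}, m \in msupp p -> (\sum_(i < 4) i.+1 * m i)%N = d.

(* Main.v *)
Require Import Defs.
From HB Require Import structures.
From mathcomp Require Import all_boot all_order all_algebra.
From mathcomp Require Import mpoly.
From mathcomp Require Import ring zify.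
From Stdlib Require Import FunctionalExtensionality.
Set Implicit Arguments. Unset Strict Implicit. Unset Printing Implicit Defensive.
Import Order.TTheory GRing.Theory Num.Theory.
Local Open Scope ring_scope.

Definition wt (m : 'X_{1..4}) : nat := (\sum_(i < 4) i.+1 * m i)%N.

Lemma wt_homogP d p : wt_homog d p <-> (forall m, wt m <> d -> p@_m = 0).
Proof.
split=> H m.
  move=> Hm; case: (eqVneq p@_m 0) => // Hp; exfalso; apply: Hm.
  by apply: H; rewrite mcoeff_msupp Hp.
rewrite mcoeff_msupp => Hm; case: (eqVneq (wt m) d) => // /eqP Hne.
by move: Hm; rewrite H ?eqxx //; apply/eqP.
Qed.

Lemma wtD m1 m2 : wt (m1 + m2)%MM = (wt m1 + wt m2)%N.
Proof. by rewrite /wt -big_split; apply: eq_bigr => i _; rewrite mnmDE mulnDr. Qed.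

Lemma wh0 d : wt_homog d 0.
Proof. by apply/wt_homogP => m _; rewrite mcoeff0. Qed.

Lemma whD d p r : wt_homog d p -> wt_homog d r -> wt_homog d (p + r).
Proof. move=> /wt_homogP H1 /wt_homogP H2; apply/wt_homogP => m Hm; by rewrite mcoeffD H1 ?H2 ?addr0. Qed.

Lemma whN d p : wt_homog d p -> wt_homog d (- p).
Proof. move=> /wt_homogP H1; apply/wt_homogP => m Hm; by rewrite mcoeffN H1 ?oppr0. Qed.

Lemma whB d p r : wt_homog d p -> wt_homog d r -> wt_homog d (p - r).
Proof. by move=> ? ?; apply: whD => //; apply: whN. Qed.

Lemma whMn d p k : wt_homog d p -> wt_homog d (p *+ k).
Proof. move=> /wt_homogP H1; apply/wt_homogP => m Hm; by rewrite mcoeffMn H1 ?mul0rn. Qed.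

Lemma whZ d (c : rat) p : wt_homog d p -> wt_homog d (c *: p).
Proof. move=> /wt_homogP H1; apply/wt_homogP => m Hm; by rewrite mcoeffZ H1 ?mulr0. Qed.

Lemma whM d1 d2 p r : wt_homog d1 p -> wt_homog d2 r -> wt_homog (d1 + d2) (p * r).
Proof.
move=> /wt_homogP H1 /wt_homogP H2; apply/wt_homogP => m Hm; rewrite mcoeffM.
apply: big1 => k /eqP Hk.
case: (eqVneq (wt k.1) d1) => [E1|/eqP E1]; last by rewrite H1 ?mul0r.
case: (eqVneq (wt k.2) d2) => [E2|/eqP E2]; last by rewrite H2 ?mulr0.
by exfalso; apply: Hm; rewrite Hk wtD E1 E2.
Qed.

Lemma wh_sum d (I : finType) (P : pred I) (F : I -> Rq) :
  (forall i, P i -> wt_homog d (F i)) -> wt_homog d (\sum_(i | P i) F i).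
Proof. move=> H; apply: (big_ind (wt_homog d)) => //; [exact: wh0|exact: whD]. Qed.

Lemma wh1 : wt_homog 0 1.
Proof.
apply/wt_homogP => m Hm; rewrite mcoeff1; case: eqP => // E; exfalso; apply: Hm.
by rewrite E /wt big1 // => i _; rewrite mnm0E muln0.
Qed.

Lemma whq (i : 'I_4) : wt_homog i.+1 (q i).
Proof.
move=> m; rewrite /q msuppX mem_seq1 => /eqP ->.
rewrite /wt (bigD1 i) //= mnm1E eqxx muln1 big1 ?addn0 // => j /negbTE Hj.
by rewrite mnm1E eq_sym Hj muln0.
Qed.

Definition agree (n : nat) (P : {poly Rq}) (a : fps Rq) := forall i, (i <= n)%N -> P`_i = a i.

Lemma agree_mul n P Q a b : agree n P a -> agree n Q b -> agree n (P * Q) (fps_mul a b).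
Proof.
move=> HP HQ i Hi; rewrite coefM /fps_mul; apply: eq_bigr => j _.
rewrite HP ?HQ //; [lia|]. have := ltn_ord j; lia.
Qed.

Lemma agree_add n P Q a b : agree n P a -> agree n Q b -> agree n (P + Q) (fps_add a b).
Proof. by move=> HP HQ i Hi; rewrite coefD HP ?HQ. Qed.

Lemma agree_scale n P a c : agree n P a -> agree n (c%:P * P) (fps_scale c a).
Proof. by move=> HP i Hi; rewrite coefCM HP. Qed.

Lemma agree_deriv n P a : agree n.+1 P a -> agree n P^`() (fps_deriv a).
Proof. by move=> HP i Hi; rewrite coef_deriv HP. Qed.

Lemma agree_pow n P a k : agree n P a -> agree n (P ^+ k) (fps_pow a k).
Proof.
move=> HP; elim: k => [|k IH].
  by move=> i Hi; rewrite expr0 coefC /fps_pow /=.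
by rewrite exprS /fps_pow iterS; apply: agree_mul.
Qed.

Lemma agree_le n m P a : (m <= n)%N -> agree n P a -> agree m P a.
Proof. by move=> Hmn H i Hi; apply: H; lia. Qed.

Definition trunc (N : nat) (f : fps Rq) : {poly Rq} := \poly_(i < N) f i.

Lemma agree_trunc n N f : (n < N)%N -> agree n (trunc N f) f.
Proof. by move=> HN i Hi; rewrite coef_poly; case: ifP => //; lia. Qed.

Definition Wp (F : {poly Rq}) := F^`()^`() * F - F^`() * F^`().
Definition Pp (F : {poly Rq}) a b := F^`() ^+ a * F ^+ b.
Definition Ep (F : {poly Rq}) := Wp F ^+ 2 -
  (Pp F 4 0 + q1%:P * Pp F 3 1 + q2%:P * Pp F 2 2 + q3%:P * Pp F 1 3 + q4%:P * Pp F 0 4).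

Definition Ef (f : fps Rq) (n : nat) : Rq :=
  let f1 := fps_deriv f in
  let f2 := fps_deriv f1 in
  let W := fps_add (fps_mul f2 f) (fps_scale (-1) (fps_mul f1 f1)) in
  let P a b := fps_mul (fps_pow f1 a) (fps_pow f b) in
    fps_pow W 2%N n -
    (P 4%N 0%N n + q1 * P 3%N 1%N n + q2 * P 2%N 2%N n
    + q3 * P 1%N 3%N n + q4 * P 0%N 4%N n).

Lemma odeE f : ode_for_logderiv f <-> forall n, Ef f n = 0.
Proof.
rewrite /ode_for_logderiv /Ef /=; split=> H n; have := H n => E.
  by rewrite E subrr.
by apply/eqP; rewrite -subr_eq0 E.
Qed.

Lemma Ef_coef f n F : agree n.+2 F f -> Ef f n = (Ep F)`_n.
Proof.
move=> HF.
have H1 : agree n.+1 F^`() (fps_deriv f) by apply: agree_deriv.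
have H2 : agree n F^`()^`() (fps_deriv (fps_deriv f)) by apply: agree_deriv.
have H0 : agree n F f by apply: agree_le HF; lia.
have H1' : agree n F^`() (fps_deriv f) by apply: agree_le H1; lia.
have HW : agree n (Wp F) (fps_add (fps_mul (fps_deriv (fps_deriv f)) f)
     (fps_scale (-1) (fps_mul (fps_deriv f) (fps_deriv f)))).
  move=> i Hi; rewrite /Wp -[X in _ - X]mul1r -mulNr -polyCN.
  by apply: (agree_add (agree_mul H2 H0) (agree_scale _ (agree_mul H1' H1'))).
have HP a b : agree n (Pp F a b) (fps_mul (fps_pow (fps_deriv f) a) (fps_pow f b)).
  by apply: agree_mul; apply: agree_pow.
rewrite /Ef /Ep coefB !coefD !coefCM (agree_pow 2 HW) // !HP //.
congr (_ - (_ + _ * _)); rewrite -(HP 0%N 4%N) // /Pp expr0.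
by rewrite !mul1r.
Qed.

Section Gen.
Variable R : comNzRingType.
Variables (Q1 Q2 Q3 Q4 G Gd Gdd G1 A B C x : R).

Definition gWt : {poly R} :=
  (Gdd * G)%:P + 'X * (Gdd * x * A + C * G1)%:P + 'X^2 * (C * A)%:P
  - (Gd%:P + 'X * B%:P) * (Gd%:P + 'X * B%:P).
Definition gFt : {poly R} := G%:P + 'X * (x * A)%:P.
Definition gFdt : {poly R} := Gd%:P + 'X * B%:P.
Definition gEt : {poly R} :=
  gWt ^+ 2 -
  (gFdt ^+ 4 * gFt ^+ 0 + Q1%:P * (gFdt ^+ 3 * gFt ^+ 1)
   + Q2%:P * (gFdt ^+ 2 * gFt ^+ 2) + Q3%:P * (gFdt ^+ 1 * gFt ^+ 3)
   + Q4%:P * (gFdt ^+ 0 * gFt ^+ 4)).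

Lemma gEt0 : gEt`_0 = (Gdd * G - Gd * Gd) ^+ 2 -
  (Gd ^+ 4 * G ^+ 0 + Q1 * (Gd ^+ 3 * G ^+ 1) + Q2 * (Gd ^+ 2 * G ^+ 2) +
   Q3 * (Gd ^+ 1 * G ^+ 3) + Q4 * (Gd ^+ 0 * G ^+ 4)).
Proof.
rewrite -horner_coef0 /gEt /gWt /gFt /gFdt.
rewrite !(hornerD, hornerN, hornerM, hornerC, hornerX, horner_exp).
ring.
Qed.

Definition gL : R :=
  2 * (Gdd * G - Gd * Gd) * (Gdd * x * A + C * G1 - 2 * Gd * B)
  - (4 * Gd ^+ 3 * B + Q1 * (3 * Gd ^+ 2 * B * G + Gd ^+ 3 * x * A)
     + Q2 * (2 * Gd * B * G ^+ 2 + Gd ^+ 2 * 2 * G * x * A)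
     + Q3 * (B * G ^+ 3 + Gd * 3 * G ^+ 2 * x * A)
     + Q4 * (4 * G ^+ 3 * x * A)).

Lemma gEt1 : gEt`_1 = gL.
Proof.
have -> : forall p : {poly R}, p`_1 = (p^`()).[0].
  by move=> p; rewrite horner_coef0 coef_deriv.
rewrite /gEt /gWt /gFt /gFdt !exprS !expr0.
rewrite !(derivD, derivN, derivM, derivC, derivX, derivB).
rewrite !(hornerD, hornerN, hornerM, hornerC, hornerX).
rewrite /gL; ring.
Qed.
End Gen.

Lemma gL_morph (R S : comNzRingType) (phi : {rmorphism R -> S}) (Q1 Q2 Q3 Q4 G Gd Gdd G1 A B C x : R) :
  phi (gL Q1 Q2 Q3 Q4 G Gd Gdd G1 A B C x) =
  gL (phi Q1) (phi Q2) (phi Q3) (phi Q4) (phi G) (phi Gd) (phi Gdd) (phi G1) (phi A) (phi B) (phi C) (phi x).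
Proof.
rewrite /gL !(rmorphB, rmorphD, rmorphM, rmorphXn, rmorph_nat, rmorph1); ring.
Qed.

Lemma gL_val (R : comNzRingType) (Q1 Q2 Q3 Q4 Gdd A B C : R) :
  gL Q1 Q2 Q3 Q4 0 1 Gdd 1 A B C 0 = - (2 * C).
Proof. rewrite /gL; ring. Qed.


Definition Et (G Gd Gdd G1 A B C : {poly Rq}) : {poly {poly Rq}} :=
  gEt q1%:P q2%:P q3%:P q4%:P G Gd Gdd G1 A B C 'X.

Lemma Ep_Et (F G G1 A B C e e1 : {poly Rq}) :
  F = G + e * ('X * A) -> F^`() = G^`() + e * B ->
  F^`()^`() = G^`()^`() + e1 * C -> G = 'X * G1 -> e = e1 * 'X ->
  Ep F = (Et G G^`() G^`()^`() G1 A B C).[e].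
Proof.
move=> HF HF1 HF2 HG He.
rewrite /Ep /Wp /Pp HF2 HF1 /Et /gEt /gWt /gFt /gFdt.
rewrite !(hornerD, hornerN, hornerM, hornerC, hornerX, horner_exp) HF.
move: (G^`()) (G^`()^`()) => Gd Gdd.
rewrite He HG; ring.
Qed.

Lemma take2 (p : {poly {poly Rq}}) :
  p = (p`_0)%:P + 'X * (p`_1)%:P + drop_poly 2 p * 'X^2.
Proof.
rewrite -{1}(poly_take_drop 2 p); congr (_ + _).
apply/polyP => i; rewrite coef_take_poly coefD coefC coefXM coefC.
by case: i => [|[|i]] //=; rewrite ?addr0 ?add0r.
Qed.

Lemma coef_hornerXn (p : {poly {poly Rq}}) m :
  (p.['X^(m.+1)])`_(m.+1) = (p`_0)`_(m.+1) + (p`_1)`_0.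
Proof.
rewrite {1}(take2 p) !(hornerD, hornerM, hornerC, hornerX, hornerXn) coefD coefD.
rewrite coefXnM ltnn subnn mulrC -mulrA coefXnM ltnn subnn coefXnM ltn0Sn addr0.
by [].
Qed.

Lemma Et0 (G G1 A B C : {poly Rq}) :
  (Et G G^`() G^`()^`() G1 A B C)`_0 = Ep G.
Proof. rewrite /Et gEt0 /Ep /Wp /Pp. reflexivity. Qed.

Lemma trunc_split f m :
  trunc m.+4 f = trunc m.+2 f + 'X^(m.+1) * ('X * ((f m.+2)%:P + (f m.+3)%:P * 'X)).
Proof.
apply/polyP => i; rewrite coefD !coef_poly coefXnM coefXM coefD coefC coefCM coefX.
case: (ltnP i m.+1) => H1.
  by rewrite !ifT ?addr0 //; lia.
have [k ->] : exists k, i = (m.+1 + k)%N by exists (i - m.+1)%N; lia.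
rewrite addKn.
case: k => [|[|[|k]]] /=.
- by rewrite addn0 ltnSn ifT ?addr0 //; lia.
- rewrite addn1 ifT; last lia. rewrite ifF; last lia. by rewrite add0r mulr0 addr0.
- rewrite addn2 ifT; last lia. rewrite ifF; last lia. by rewrite !add0r mulr1.
- rewrite ifF; last lia. rewrite ifF; last lia. by rewrite !add0r mulr0.
Qed.

Lemma deriv_step1 (G : {poly Rq}) (a b : Rq) m :
  (G + 'X^(m.+1) * ('X * (a%:P + b%:P * 'X)))^`() =
  G^`() + 'X^(m.+1) * ((m.+2)%:R * (a%:P + b%:P * 'X) + 'X * b%:P).
Proof.
rewrite !(derivD, derivM, derivXn, derivX, derivC) /= exprSr.
move: ('X^m) => Y; ring.
Qed.

Lemma deriv_step2 (Gd : {poly Rq}) (a b : Rq) m :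
  (Gd + 'X^(m.+1) * ((m.+2)%:R * (a%:P + b%:P * 'X) + 'X * b%:P))^`() =
  Gd^`() + 'X^m * ((m.+1)%:R * ((m.+2)%:R * (a%:P + b%:P * 'X) + 'X * b%:P) + 'X * ((m.+3)%:R * b%:P)).
Proof.
have dn k : ((k%:R : {poly Rq})^`() = 0) by rewrite -polyC_natr derivC.
rewrite !(dn, derivD, derivM, derivXn, derivX, derivC) [(m.+1).-1]/= exprSr.
move: ('X^m) => Y; ring.
Qed.

Lemma key f m : f 0%N = 0 -> f 1%N = 1 ->
  (Ep (trunc m.+4 f))`_m.+1 =
  (Ep (trunc m.+2 f))`_m.+1 - ((m.+1 * m.+2) * 2)%:R * f m.+2.
Proof.
move=> f0 f1.
have HF := trunc_split f m.
have HF1 := f_equal deriv HF; rewrite deriv_step1 in HF1.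
have HF2 := f_equal deriv HF1; rewrite deriv_step2 in HF2.
set G := trunc m.+2 f in HF HF1 HF2 *.
have HG : G = 'X * drop_poly 1 G.
  rewrite -{1}(poly_take_drop 1 G) mulrC addrC -[RHS]addr0; congr (_ + _).
  apply/polyP => i; rewrite coef_take_poly coef0; case: i => [|i] //=.
  by rewrite /G coef_poly /= f0.
rewrite (Ep_Et HF HF1 HF2 HG (exprSr _ _)).
rewrite coef_hornerXn Et0 /Et gEt1 -horner_coef0.
rewrite -horner_evalE gL_morph.
have hE : forall p : {poly Rq}, (horner_eval (0:Rq) : {rmorphism {poly Rq} -> Rq}) p = p.[0] by [].
rewrite !hE.
have G0 : G.[0] = 0 by rewrite HG hornerM hornerX mul0r.
have G10 : (drop_poly 1 G).[0] = 1 by rewrite horner_coef0 coef_drop_poly /G coef_poly /= f1.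
have Gd0 : (G^`()).[0] = 1 by rewrite horner_coef0 coef_deriv /G coef_poly /= f1.
rewrite G0 G10 Gd0 hornerX gL_val.
have hn k : ((k%:R : {poly Rq}).[0]) = k%:R by rewrite -polyC_natr hornerC.
rewrite !(hn, hornerD, hornerM, hornerC, hornerX).
rewrite natrM natrM; ring.
Qed.

Definition pw (P : {poly Rq}) (w : int) := forall i : nat,
  ((i%:Z + w < 0)%R -> P`_i = 0) /\ (forall d : nat, i%:Z + w = d%:Z -> wt_homog d P`_i).

Lemma pw_eq P w1 w2 : w1 = w2 -> pw P w1 -> pw P w2.
Proof. by move=> ->. Qed.

Lemma pw_mul P Q a b : pw P a -> pw Q b -> pw (P * Q) (a + b).
Proof.
move=> HP HQ i; rewrite coefM; split.
  move=> Hneg; apply: big1 => j _.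
  have Hj := ltn_ord j.
  case: (ltP (j%:Z + a) 0) => H1; first by rewrite (proj1 (HP j)) ?mul0r.
  rewrite (proj1 (HQ (i - j)%N)) ?mulr0 //; lia.
move=> d Hd; apply: wh_sum => j _.
have Hj := ltn_ord j.
case: (ltP (j%:Z + a) 0) => H1; first by rewrite (proj1 (HP j)) ?mul0r //; exact: wh0.
case: (ltP ((i - j)%N%:Z + b) 0) => H2; first by rewrite (proj1 (HQ (i - j)%N)) ?mulr0 //; exact: wh0.
have [d1 Hd1] : exists d1 : nat, j%:Z + a = d1%:Z by exists (absz (j%:Z + a)); lia.
have [d2 Hd2] : exists d2 : nat, (i - j)%N%:Z + b = d2%:Z by exists (absz ((i - j)%N%:Z + b)); lia.
have -> : d = (d1 + d2)%N by lia.
by apply: whM; [apply: (proj2 (HP j)) | apply: (proj2 (HQ (i - j)%N))].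
Qed.

Lemma pw_add P Q w : pw P w -> pw Q w -> pw (P + Q) w.
Proof.
move=> HP HQ i; rewrite coefD; split.
  by move=> H; rewrite (proj1 (HP i)) ?(proj1 (HQ i)) ?addr0.
by move=> d Hd; apply: whD; [apply: (proj2 (HP i))|apply: (proj2 (HQ i))].
Qed.

Lemma pw_opp P w : pw P w -> pw (- P) w.
Proof.
move=> HP i; rewrite coefN; split.
  by move=> H; rewrite (proj1 (HP i)) ?oppr0.
by move=> d Hd; apply: whN; apply: (proj2 (HP i)).
Qed.

Lemma pw_sub P Q w : pw P w -> pw Q w -> pw (P - Q) w.
Proof. by move=> ? ?; apply: pw_add => //; apply: pw_opp. Qed.

Lemma pw_C (c : Rq) (k : nat) : wt_homog k c -> pw c%:P k.
Proof.
move=> Hc i; rewrite coefC; split; first lia.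
case: i => [|i] d Hd /=; last exact: wh0.
by have -> : d = k by lia.
Qed.

Lemma pw_1 : pw 1 0.
Proof. rewrite -polyC1; apply: (pw_C wh1). Qed.

Lemma pw_deriv P w : pw P w -> pw P^`() (w + 1).
Proof.
move=> HP i; rewrite coef_deriv; split.
  by move=> H; rewrite (proj1 (HP i.+1)) ?mul0rn //; lia.
move=> d Hd; apply: whMn; apply: (proj2 (HP i.+1)); lia.
Qed.

Lemma pw_pow P w k : pw P w -> pw (P ^+ k) (k%:Z * w).
Proof.
move=> HP; elim: k => [|k IH]; first by rewrite expr0 mul0r; exact: pw_1.
rewrite exprS; apply: pw_eq (pw_mul HP IH); lia.
Qed.

Lemma pw_Ep G : pw G (-1) -> pw (Ep G) 0.
Proof.
move=> HG.
have H1 := pw_deriv HG. have H2 := pw_deriv H1.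
have HW : pw (Wp G) 0.
  apply: pw_sub; [apply: pw_eq (pw_mul H2 HG)|apply: pw_eq (pw_mul H1 H1)]; lia.
have HP a b : pw (Pp G a b) (- b%:Z).
  apply: pw_eq (pw_mul (pw_pow a H1) (pw_pow b HG)); lia.
have Hq (i : 'I_4) b : (b = i.+1)%N -> pw ((q i)%:P * Pp G (4 - b)%N b) 0.
  move=> ->; apply: pw_eq (pw_mul (pw_C (@whq i)) (HP _ _)); lia.
apply: pw_sub; first by apply: pw_eq (pw_pow 2 HW); lia.
apply: pw_add; last exact: (Hq (@Ordinal 4 3 isT) 4%N).
apply: pw_add; last exact: (Hq (@Ordinal 4 2 isT) 3%N).
apply: pw_add; last exact: (Hq (@Ordinal 4 1 isT) 2%N).
apply: pw_add; last exact: (Hq (@Ordinal 4 0 isT) 1%N).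
by apply: pw_eq (HP 4%N 0%N); lia.
Qed.

Section SRec.
Variables (T : Type) (d : T) (step : nat -> (nat -> T) -> T).
Hypothesis step_ext : forall n g h, (forall i, (i < n)%N -> g i = h i) -> step n g = step n h.

Fixpoint sl (n : nat) : seq T :=
  match n with
  | 0%N => [:: step 0 (fun _ => d)]
  | S n' => rcons (sl n') (step n (fun i => nth d (sl n') i))
  end.
Definition srec n := nth d (sl n) n.

Lemma size_sl n : size (sl n) = n.+1.
Proof. by elim: n => [|n IH] //=; rewrite size_rcons IH. Qed.

Lemma nth_sl n i : (i <= n)%N -> nth d (sl n) i = srec i.
Proof.
elim: n i => [|n IH] i Hi.
  by have -> : i = 0%N by lia.
case: (ltnP i n.+1) => Hi'.
  by rewrite /= nth_rcons size_sl Hi' IH.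
have -> : i = n.+1 by lia.
by [].
Qed.

Lemma srecE n : srec n = step n srec.
Proof.
case: n => [|n].
  by rewrite /srec /=; apply: step_ext.
rewrite /srec /= nth_rcons size_sl ltnn eqxx; apply: step_ext => i Hi.
by apply: nth_sl; lia.
Qed.

Lemma srec_uniq g : (forall n, g n = step n g) -> forall n, g n = srec n.
Proof.
move=> Hg n; elim/ltn_ind: n => n IH.
by rewrite Hg srecE; apply: step_ext.
Qed.
End SRec.

Definition kk m : nat := (m.+1 * m.+2 * 2)%N.

Lemma kk_neq0 m : ((kk m)%:R : rat) != 0.
Proof. by rewrite pnatr_eq0 /kk; apply/eqP; lia. Qed.

Lemma kk_scale m (z : Rq) : (kk m)%:R * z = ((kk m)%:R : rat) *: z.
Proof. by rewrite mulr_natl scaler_nat. Qed.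

Lemma kkK m (z : Rq) : (kk m)%:R * (((kk m)%:R^-1 : rat) *: z) = z.
Proof. by rewrite kk_scale scalerA mulfV ?kk_neq0 // scale1r. Qed.

Lemma kk_inj m (x y : Rq) : (kk m)%:R * x = (kk m)%:R * y -> x = y.
Proof.
move=> H; have := f_equal (fun z => ((kk m)%:R^-1 : rat) *: z) H.
by rewrite !kk_scale !scalerA mulVf ?kk_neq0 // !scale1r.
Qed.

Definition stepf (n : nat) (g : nat -> Rq) : Rq :=
  match n with
  | 0%N => 0
  | 1%N => 1
  | S (S m) => ((kk m)%:R^-1 : rat) *: (Ep (trunc m.+2 g))`_m.+1
  end.

Lemma stepf_ext n g h : (forall i, (i < n)%N -> g i = h i) -> stepf n g = stepf n h.
Proof.
case: n => [|[|m]] // H; rewrite /stepf.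
have -> : trunc m.+2 g = trunc m.+2 h.
  by apply/polyP => i; rewrite !coef_poly; case: ifP => // /H ->.
by [].
Qed.

Lemma Ef0 f : f 0%N = 0 -> f 1%N = 1 -> Ef f 0 = 0.
Proof.
move=> f0 f1.
rewrite (@Ef_coef f 0 (trunc 3 f)); last by apply: agree_trunc.
set F := trunc 3 f.
have F0 : F.[0] = 0 by rewrite horner_coef0 coef_poly /= f0.
have F1 : (F^`()).[0] = 1 by rewrite horner_coef0 coef_deriv coef_poly /= f1.
rewrite -horner_coef0 /Ep /Wp /Pp.
rewrite !(hornerD, hornerN, hornerM, horner_exp, hornerC) F0 F1.
ring.
Qed.

Lemma key' f m : f 0%N = 0 -> f 1%N = 1 ->
  Ef f m.+1 = (Ep (trunc m.+2 f))`_m.+1 - (kk m)%:R * f m.+2.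
Proof.
move=> f0 f1; rewrite (@Ef_coef f m.+1 (trunc m.+4 f)); last by apply: agree_trunc.
by rewrite key.
Qed.

Lemma sol_step f : normalized f -> ode_for_logderiv f -> forall n, f n = stepf n f.
Proof.
move=> [f0 f1] /odeE Hode [|[|m]] //.
have := Hode m.+1; rewrite key' // => /eqP; rewrite subr_eq0 => /eqP E.
by rewrite /stepf; apply: (@kk_inj m); rewrite kkK E.
Qed.

Definition fsol : fps Rq := srec 0 stepf.

Lemma fsolE n : fsol n = stepf n fsol.
Proof. exact: (srecE _ stepf_ext). Qed.

Lemma fsol_norm : normalized fsol.
Proof. by split; rewrite fsolE. Qed.

Lemma fsol_ode : ode_for_logderiv fsol.
Proof.
have [f0 f1] := fsol_norm.
apply/odeE => [[|m]]; first exact: Ef0.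
by rewrite key' // (fsolE m.+2) /= kkK subrr.
Qed.

Lemma sol_unique f : normalized f -> ode_for_logderiv f -> f = fsol.
Proof.
move=> Hn Ho; apply: functional_extensionality => n.
rewrite /fsol; exact: (@srec_uniq _ 0 stepf stepf_ext f (sol_step Hn Ho)).
Qed.

Lemma sol_weight f : normalized f -> ode_for_logderiv f -> forall n, wt_homog n.-1 (f n).
Proof.
move=> Hn Ho; have [f0 f1] := Hn.
move=> n; elim/ltn_ind: n => n IH.
case: n IH => [|[|m]] IH.
- by rewrite f0; exact: wh0.
- by rewrite f1; exact: wh1.
rewrite (sol_step Hn Ho) /=; apply: whZ.
have HG : pw (trunc m.+2 f) (-1).
  move=> i; rewrite coef_poly; case: ifP => Hi; last by split=> [|d _]; [|exact: wh0].
  split=> [H|d Hd]; first by have -> : i = 0%N by lia.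
  have -> : d = i.-1 by lia.
  by apply: IH; lia.
by apply: (proj2 (pw_Ep HG m.+1)); lia.
Qed.

Definition stepQ (f : fps Rq) (k : nat) (g : nat -> Rq) : Rq :=
  (k == 0%N)%:R - \sum_(i < k) g i * f (k.+1 - i)%N.

Lemma stepQ_ext f n g h : (forall i, (i < n)%N -> g i = h i) -> stepQ f n g = stepQ f n h.
Proof. by move=> H; rewrite /stepQ; congr (_ - _); apply: eq_bigr => i _; rewrite H. Qed.

Lemma mulQf (Q f : fps Rq) k : f 0%N = 0 -> f 1%N = 1 ->
  fps_mul Q f k.+1 = \sum_(i < k) Q i * f (k.+1 - i)%N + Q k.
Proof.
move=> f0 f1; rewrite /fps_mul big_ord_recr /= subnn f0 mulr0 addr0.
by rewrite big_ord_recr /= subSnn f1 mulr1.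
Qed.

Lemma Qchar (Q f : fps Rq) : f 0%N = 0 -> f 1%N = 1 ->
  (forall n, fps_mul Q f n = fps_X Rq n) <-> (forall k, Q k = stepQ f k Q).
Proof.
move=> f0 f1; split=> H.
  move=> k; have := H k.+1; rewrite mulQf // /fps_X /stepQ => E.
  have -> : (k == 0%N)%:R = \sum_(i < k) Q i * f (k.+1 - i)%N + Q k by rewrite E; case: k {E}.
  by rewrite [_ + Q k]addrC addrK.
case=> [|k].
  by rewrite /fps_mul big_ord_recr big_ord0 /= f0 mulr0 add0r.
rewrite mulQf // (H k) /stepQ /fps_X.
by case: k {H} => [|k] /=; rewrite addrC subrK.
Qed.

Lemma Q_weight (Q f : fps Rq) : f 0%N = 0 -> (forall n, wt_homog n.-1 (f n)) ->
  (forall k, Q k = stepQ f k Q) -> forall n, wt_homog n (Q n).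
Proof.
move=> f0 Hf HQ n; elim/ltn_ind: n => n IH.
rewrite HQ /stepQ; apply: whB.
  by case: n {IH} => [|n] /=; [exact: wh1|exact: wh0].
apply: wh_sum => i _.
have Hi := ltn_ord i.
have H2 : wt_homog (n - i)%N (f (n.+1 - i)%N).
  by have := Hf (n.+1 - i)%N; have -> : (n.+1 - i)%N.-1 = (n - i)%N by lia.
by have := whM (IH i Hi) H2; rewrite subnKC // ltnW.
Qed.

Theorem lemma2p2p1 :
  (exists! f : fps Rq, normalized f /\ ode_for_logderiv f) /\
  (forall f : fps Rq, normalized f -> ode_for_logderiv f ->
     (exists! Q : fps Rq, forall n, fps_mul Q f n = fps_X Rq n) /\
     (forall Q : fps Rq, (forall n, fps_mul Q f n = fps_X Rq n) ->
        Q 0%N = 1 /\ (forall n : nat, wt_homog n (Q n)))).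
Proof.
split.
  exists fsol; split; first by split; [exact: fsol_norm|exact: fsol_ode].
  by move=> g [Hn Ho]; rewrite (sol_unique Hn Ho).
move=> f Hn Ho; have [f0 f1] := Hn.
have Hw := sol_weight Hn Ho.
split.
  exists (srec 0 (stepQ f)); split.
    by apply/Qchar => // k; exact: (@srecE _ 0 (stepQ f) (stepQ_ext f) k).
  move=> Q /(Qchar _ f0 f1) HQ; apply: functional_extensionality => n.
  by rewrite (@srec_uniq _ 0 (stepQ f) (stepQ_ext f) Q HQ).
move=> Q /(Qchar _ f0 f1) HQ; split.
  by rewrite HQ /stepQ big_ord0 subr0.
exact: (Q_weight f0 Hw HQ).
Qed.
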